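(* Let $k\ge 3$. For $i=1,2$ let $m_i\ge 2$ and $r_i\ge 1$ be integers and suppose $\mathcal{C}_i$ is a coloring of $\mathbb{Z}_{m_i}\setminus\{0\}$ with $r_i$ colors such that, for every choice of one of the $r_i$ colors for $0$, the resulting coloring of $\mathbb{Z}_{m_i}$ contains no nontrivial monochromatic $k$-AP. Then there is a coloring of $\mathbb{Z}_{m_1m_2}\setminus\{0\}$ with $r_1r_2$ colors such that, for every choice of one of the $r_1r_2$ colors for $0$, the resulting coloring of $\mathbb{Z}_{m_1m_2}$ contains no nontrivial monochromatic $k$-AP.
   Context: A $k$-AP in $\mathbb{Z}_m$ is a sequence $a,a+d,\ldots,a+(k-1)d$ with $a,d\in\mathbb{Z}_m$; it is trivial if $d\equiv 0\pmod m$ (equivalently all terms are equal) and nontrivial otherwise. A progression is monochromatic if all its terms receive the same color. *)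

(* Defs.v *)
From HB Require Import structures.
From mathcomp Require Import all_boot all_order all_algebra.
Set Implicit Arguments. Unset Strict Implicit. Unset Printing Implicit Defensive.
Import GRing.Theory.
Local Open Scope ring_scope.

(* A coloring of Z_m \ {0} with r colors is represented by c : 'Z_m -> 'I_r
   whose value at 0 is irrelevant.  [ext_col c x0] colors 0 with x0 and
   every nonzero x with c x. *)
Definition ext_col (m r : nat) (c : 'Z_m -> 'I_r) (x0 : 'I_r) : 'Z_m -> 'I_r :=
  fun x => if x == 0 then x0 else c x.

Definition has_mono_kAP (m : nat) (T : Type) (k : nat) (col : 'Z_m -> T) : Prop :=
  exists a d : 'Z_m, d != 0 /\ (forall j : nat, (j < k)%N -> col (a + j%:R * d) = col a).

(* Main.v *)
Require Import Defs.
From HB Require Import structures.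
From mathcomp Require Import all_boot all_order all_algebra.
From mathcomp Require Import zify.
Import GRing.Theory.

Lemma Zval (p : nat) (hp : (1 < p)%N) (a d : 'Z_p) (j : nat) :
  val (a + j%:R * d)%R = ((val a + j * val d) %% p)%N.
Proof.
have -> : (a + j%:R * d = ((val a + j * val d)%N)%:R :> 'Z_p)%R.
  by rewrite natrD natrM !natr_Zp.
by apply: (val_Zp_nat hp).
Qed.

Lemma encP {r1 r2} (i : 'I_r1) (l : 'I_r2) : (i * r2 + l < r1 * r2)%N.
Proof. have := ltn_ord i; have := ltn_ord l; nia. Qed.

Definition enc {r1 r2} (i : 'I_r1) (l : 'I_r2) : 'I_(r1 * r2) := Ordinal (encP i l).

Lemma dec1P {r1 r2} (hr2 : (0 < r2)%N) (z : 'I_(r1 * r2)) : (z %/ r2 < r1)%N.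
Proof. by rewrite ltn_divLR. Qed.
Definition dec1 {r1 r2} (hr2 : (0 < r2)%N) (z : 'I_(r1 * r2)) : 'I_r1 :=
  Ordinal (dec1P hr2 z).
Definition dec2 {r1 r2} (hr2 : (0 < r2)%N) (z : 'I_(r1 * r2)) : 'I_r2 :=
  Ordinal (ltn_pmod z hr2).

Lemma dec1_enc r1 r2 (hr2 : (0 < r2)%N) i l : dec1 hr2 (@enc r1 r2 i l) = i.
Proof. by apply: val_inj => /=; rewrite divnMDl // divn_small // addn0. Qed.
Lemma dec2_enc r1 r2 (hr2 : (0 < r2)%N) i l : dec2 hr2 (@enc r1 r2 i l) = l.
Proof. by apply: val_inj => /=; rewrite -modnDml modnMl add0n modn_small. Qed.

Theorem mainTheorem4 (k m1 m2 r1 r2 : nat)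
  (hk : (3 <= k)%N) (hm1 : (2 <= m1)%N) (hm2 : (2 <= m2)%N)
  (hr1 : (1 <= r1)%N) (hr2 : (1 <= r2)%N)
  (c1 : 'Z_m1 -> 'I_r1) (c2 : 'Z_m2 -> 'I_r2)
  (h1 : forall x0 : 'I_r1, ~ has_mono_kAP k (ext_col c1 x0))
  (h2 : forall x0 : 'I_r2, ~ has_mono_kAP k (ext_col c2 x0)) :
  exists c : 'Z_(m1 * m2) -> 'I_(r1 * r2),
    forall x0 : 'I_(r1 * r2), ~ has_mono_kAP k (ext_col c x0).
Proof.
have hn : (1 < m1 * m2)%N by nia.
pose f1 (x : 'Z_(m1 * m2)) : 'Z_m1 := ((val x)%:R)%R.
pose f2 (x : 'Z_(m1 * m2)) : 'Z_m2 := (((val x %/ m1)%N)%:R)%R.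
exists (fun x => enc (c1 (f1 x)) (c2 (f2 x))).
move=> x0 [a [d [dnz mono]]].
set C := ext_col (fun x => enc (c1 (f1 x)) (c2 (f2 x))) x0 a.
have key : forall j, (j < k)%N -> (a + j%:R * d)%R != 0%R ->
    enc (c1 (f1 (a + j%:R * d)%R)) (c2 (f2 (a + j%:R * d)%R)) = C.
  move=> j hj nz; have := mono j hj; rewrite /ext_col (negbTE nz) => ->.
  by [].
have a0 : (a + 0%:R * d = a)%R by rewrite mul0r addr0.
have k0 : (0 < k)%N by apply: leq_trans hk.
have vd0 : val d != 0%N.
  by apply: contra dnz => /eqP h; apply/eqP; apply: val_inj.
case: (boolP (val d %% m1 == 0)%N) => hd.
- apply: (h2 (dec2 hr2 C)).
  have hf2 : forall j, f2 (a + j%:R * d)%R = (f2 a + j%:R * f2 d)%R.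
    move=> j; rewrite /f2 -natrM -natrD; apply: val_inj.
    have mm : forall X, (X %% (m1 * m2) %/ m1 %% m2 = X %/ m1 %% m2)%N.
      by move=> X; rewrite mulnC -modn_divl modn_mod.
    rewrite Zval // /= !val_Zp_nat // mm.
    have hdv : (m1 %| val d)%N by [].
    rewrite -{1}(divnK hdv) mulnA divnDMl; last by apply: leq_trans hm1.
    by [].
  have claim : forall j, (j < k)%N ->
      ext_col c2 (dec2 hr2 C) (f2 (a + j%:R * d)%R) = dec2 hr2 C.
    move=> j hj; rewrite /ext_col; case: eqP => // nz.
    have nzx : (a + j%:R * d)%R != 0%R.
      apply/eqP => h; apply: nz; rewrite h /f2 /=.
      by apply: val_inj; rewrite /= val_Zp_nat // div0n mod0n.
    by rewrite -(key j hj nzx) dec2_enc.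
  exists (f2 a), (f2 d); split.
    apply/eqP => /(congr1 val); rewrite /f2 /= val_Zp_nat // modn_small /=.
      have hdv : (m1 %| val d)%N by [].
      move=> h; move: vd0; rewrite -(divnK hdv) h mul0n; by [].
    have hdlt : (val d < m1 * m2)%N by rewrite -[X in (_ < X)%N](Zp_cast hn); exact: ltn_ord.
    rewrite ltn_divLR; last by apply: leq_trans hm1.
    by rewrite [(m2 * m1)%N]mulnC.
  move=> j hj; rewrite -hf2 claim // -{1}a0 claim //.
- apply: (h1 (dec1 hr2 C)).
  have hf1 : forall j, f1 (a + j%:R * d)%R = (f1 a + j%:R * f1 d)%R.
    move=> j; rewrite /f1 -natrM -natrD; apply: val_inj.
    rewrite Zval // /= !val_Zp_nat // modn_dvdm //; exact: dvdn_mulr.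
  have claim : forall j, (j < k)%N ->
      ext_col c1 (dec1 hr2 C) (f1 (a + j%:R * d)%R) = dec1 hr2 C.
    move=> j hj; rewrite /ext_col; case: eqP => // nz.
    have nzx : (a + j%:R * d)%R != 0%R.
      apply/eqP => h; apply: nz; rewrite h /f1 /=.
      by apply: val_inj; rewrite /= ?val_Zp_nat ?mod0n.
    by rewrite -(key j hj nzx) dec1_enc.
  exists (f1 a), (f1 d); split.
    apply/eqP => /(congr1 val); rewrite /f1 /= val_Zp_nat //= => h.
    by move: hd; rewrite h.
  move=> j hj; rewrite -hf1 claim // -{1}a0 claim //.
Qed.
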